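(* Let $S>0$, $d\ge1$, $\Delta s=S/(d+1)$ and $\boldsymbol L$ the $d\times d$ tridiagonal matrix $\Delta s^{-2}\,\mathrm{tridiag}(1,-2,1)$. Consider the linear Hamiltonian system in $(\boldsymbol u,\boldsymbol p)\in\mathbb{R}^d\times\mathbb{R}^d$ $$\dot{\boldsymbol u}=-\boldsymbol L^{-1}\boldsymbol p,\qquad \dot{\boldsymbol p}=\boldsymbol L\boldsymbol u-\boldsymbol u,$$ and for $c\in[0,1]$ the Strang splitting integrator $\psi_h=\varphi^{(B)}_{h/2}\circ\varphi^{(A)}_h\circ\varphi^{(B)}_{h/2}$, where $\varphi^{(A)}_t$ is the flow of $\dot{\boldsymbol u}=-\boldsymbol L^{-1}\boldsymbol p,\ \dot{\boldsymbol p}=c^2\boldsymbol L\boldsymbol u$ and $\varphi^{(B)}_t$ the flow of $\dot{\boldsymbol u}=0,\ \dot{\boldsymbol p}=(1-c^2)\boldsymbol L\boldsymbol u-\boldsymbol u$. Let $\omega_1^2=\frac4{\Delta s^2}\sin^2\!\big(\frac\pi{2(d+1)}\big)$ be the smallest eigenvalue of $-\boldsymbol L$. If $h>0$ satisfies $$ch+2\arctan\!\Big(\frac{h(1+(1-c^2)\omega_1^2)}{2c\omega_1^2}\Big)<\pi\ \text{ if }c\in(0,1],\qquad h<\frac{2\omega_1}{\sqrt{1+\omega_1^2}}\ \text{ if }c=0,$$ then the integrator is stable, i.e. the powers $\psi_h^n$, $n=0,1,2,\dots$, are uniformly bounded.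
   Context: This is the integrator used in preconditioned HMC (mass matrix $-\boldsymbol L$) for the discretized Ornstein–Uhlenbeck bridge on $[0,S]$ with homogeneous Dirichlet conditions; $c=0$ gives velocity Verlet. *)

(* Defs.v *)
From Stdlib Require Import Reals ClassicalEpsilon.
Open Scope R_scope.

(* Vectors in R^d are represented as functions nat -> R, of which only the
   components 0 .. d-1 are meaningful.  A phase-space state is a pair (u, p). *)
Definition vec := nat -> R.
Definition state := (vec * vec)%type.

Definition ds (Sl : R) (d : nat) : R := Sl / INR (d + 1)%nat.

(* L u  with  L = Delta s^{-2} tridiag(1,-2,1), homogeneous Dirichlet b.c. *)
Definition Lmul (Sl : R) (d : nat) (u : vec) : vec := fun i =>
  ((match i with O => 0 | S i' => u i' end) - 2 * u i
   + (if Nat.ltb (i + 1)%nat d then u (i + 1)%nat else 0)) / (ds Sl d ^ 2).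

(* L^{-1} p : the (unique, L being invertible) vector v of R^d with L v = p. *)
Definition Linv (Sl : R) (d : nat) (p : vec) : vec :=
  epsilon (inhabits (fun _ : nat => 0))
    (fun v : vec => forall i, (i < d)%nat -> Lmul Sl d v i = p i).

Definition fieldA (Sl : R) (d : nat) (c : R) (x : state) : state :=
  (fun i => - Linv Sl d (snd x) i, fun i => c ^ 2 * Lmul Sl d (fst x) i).

Definition fieldB (Sl : R) (d : nat) (c : R) (x : state) : state :=
  (fun _ => 0, fun i => (1 - c ^ 2) * Lmul Sl d (fst x) i - fst x i).

Definition is_flow (d : nat) (f : state -> state) (F : R -> state -> state) : Prop :=
  forall x : state,
    (forall i, (i < d)%nat -> fst (F 0 x) i = fst x i /\ snd (F 0 x) i = snd x i) /\
    (forall t i, (i < d)%nat ->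
       derivable_pt_lim (fun s => fst (F s x) i) t (fst (f (F t x)) i) /\
       derivable_pt_lim (fun s => snd (F s x) i) t (snd (f (F t x)) i)).

Definition strang (FA FB : R -> state -> state) (h : R) (x : state) : state :=
  FB (h / 2) (FA h (FB (h / 2) x)).

Fixpoint rsum (n : nat) (f : nat -> R) : R :=
  match n with O => 0 | S n' => rsum n' f + f n' end.

Definition snorm (d : nat) (x : state) : R :=
  rsum d (fun i => Rabs (fst x i) + Rabs (snd x i)).

Definition omega1 (Sl : R) (d : nat) : R :=
  2 / ds Sl d * sin (PI / (2 * INR (d + 1)%nat)).

(* Main.v *)
Require Import Defs.
From Stdlib Require Import Reals Lra Lia ClassicalEpsilon.
Open Scope R_scope.

Lemma rsum_ext n f g : (forall i, (i < n)%nat -> f i = g i) -> rsum n f = rsum n g.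
Proof. induction n; simpl; intros H; auto. rewrite IHn by (intros; apply H; lia). rewrite (H n) by lia; auto. Qed.

Lemma rsum_plus n f g : rsum n (fun i => f i + g i) = rsum n f + rsum n g.
Proof. induction n; simpl; [lra|rewrite IHn; lra]. Qed.

Lemma rsum_scal n r f : rsum n (fun i => r * f i) = r * rsum n f.
Proof. induction n; simpl; [lra|rewrite IHn; lra]. Qed.

Lemma rsum_const n r : rsum n (fun _ => r) = INR n * r.
Proof. induction n; simpl rsum; [simpl; lra|rewrite IHn, S_INR; lra]. Qed.

Lemma rsum_le n f g : (forall i, (i < n)%nat -> f i <= g i) -> rsum n f <= rsum n g.
Proof. induction n; simpl; intros H; [lra|]. specialize (H n) as Hn.
 assert (rsum n f <= rsum n g) by (apply IHn; intros; apply H; lia). assert (f n <= g n) by (apply H; lia). lra. Qed.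

Lemma rsum_abs n f : Rabs (rsum n f) <= rsum n (fun i => Rabs (f i)).
Proof. induction n; simpl. rewrite Rabs_R0; lra. eapply Rle_trans; [apply Rabs_triang|]. lra. Qed.

Lemma rsum_swap n m (F : nat -> nat -> R) :
  rsum n (fun i => rsum m (fun j => F i j)) = rsum m (fun j => rsum n (fun i => F i j)).
Proof. induction n; simpl. induction m; simpl; lra.
 rewrite IHn. rewrite <- rsum_plus. reflexivity. Qed.

Lemma rsum_shift n g : rsum (S n) g = g O + rsum n (fun k => g (S k)).
Proof. induction n. simpl; lra. change (rsum (S (S n)) g) with (rsum (S n) g + g (S n)).
 rewrite IHn. simpl. lra. Qed.

Lemma rsum_delta n i f : (i < n)%nat ->
  rsum n (fun j => if Nat.eqb i j then f j else 0) = f i.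
Proof. induction n; intros H; [lia|]. simpl. destruct (Nat.eq_dec i n).
 - subst. rewrite Nat.eqb_refl. rewrite (rsum_ext _ _ (fun _ => 0)).
   rewrite rsum_const; lra. intros j Hj. destruct (Nat.eqb_spec n j); [lia|auto].
 - rewrite IHn by lia. destruct (Nat.eqb_spec i n); [lia|lra]. Qed.

Lemma rsum_nonneg n f : (forall i, (i < n)%nat -> 0 <= f i) -> 0 <= rsum n f.
Proof. intros H. rewrite <- (Rmult_0_r (INR n)), <- rsum_const. apply rsum_le. auto. Qed.

Lemma rsum_deriv n (c : nat -> R) (F : nat -> R -> R) (F' : nat -> R) t :
  (forall i, (i < n)%nat -> derivable_pt_lim (F i) t (F' i)) ->
  derivable_pt_lim (fun s => rsum n (fun i => c i * F i s)) t (rsum n (fun i => c i * F' i)).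
Proof. induction n; intros H; simpl.
 - apply (derivable_pt_lim_const 0).
 - apply (derivable_pt_lim_plus (fun s => rsum n (fun i => c i * F i s)) (fun s => c n * F n s)).
   apply IHn; intros; apply H; lia.
   apply (derivable_pt_lim_scal (F n) (c n)). apply H; lia. Qed.

Lemma cos_sum x n : 2 * sin (x/2) * rsum (S n) (fun k => cos (INR k * x)) =
  sin ((INR n + /2) * x) + sin (x/2).
Proof. induction n.
 - simpl. rewrite Rmult_0_l, cos_0. replace ((0 + /2) * x) with (x/2) by field. lra.
 - change (rsum (S (S n)) (fun k => cos (INR k * x))) with
     (rsum (S n) (fun k => cos (INR k * x)) + cos (INR (S n) * x)).
   rewrite Rmult_plus_distr_l, IHn. rewrite S_INR.
   replace ((INR n + 1 + /2) * x) with ((INR n + 1) * x + x/2) by field.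
   replace ((INR n + /2) * x) with ((INR n + 1) * x - x/2) by field.
   rewrite sin_plus, sin_minus. ring. Qed.

Lemma sin_nPI n : sin (INR n * PI) = 0.
Proof. apply sin_eq_0_1. exists (Z.of_nat n). rewrite <- INR_IZR_INZ. auto. Qed.

Definition th d := PI / INR (d+1).

Lemma INR_d1_pos d : 0 < INR (d+1).
Proof. apply lt_0_INR; lia. Qed.

Lemma th_pos d : 0 < th d.
Proof. unfold th. apply Rdiv_lt_0_compat. apply PI_RGT_0. apply INR_d1_pos. Qed.

Lemma cs_val d m : sin (m * th d / 2) <> 0 -> sin (m * PI) = 0 ->
  rsum (S d) (fun k => cos (INR k * (m * th d))) = (1 - cos (m * PI)) / 2.
Proof. intros Hs Hm. pose proof (cos_sum (m * th d) d) as E.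
 assert (Hd := INR_d1_pos d). rewrite plus_INR in Hd; simpl in Hd.
 replace ((INR d + /2) * (m * th d)) with (m * PI - m * th d / 2) in E.
 2:{ unfold th. rewrite plus_INR. simpl. field. lra. }
 rewrite sin_minus, Hm in E.
 apply (Rmult_eq_reg_l (2 * sin (m * th d / 2))). rewrite E. field. intro H; apply Hs; lra.
 Qed.

Lemma orth d I J : (1 <= I <= d)%nat -> (1 <= J <= d)%nat ->
  rsum d (fun k => sin (INR I * (INR (k+1) * th d)) * sin (INR J * (INR (k+1) * th d))) =
  if Nat.eqb I J then INR (d+1) / 2 else 0.
Proof. intros HI HJ.
 assert (Hd := INR_d1_pos d).
 assert (Ht := th_pos d).
 assert (HthP : INR (d+1) * th d = PI) by (unfold th; field; lra).
 transitivity (rsum (S d) (fun k => sin (INR I * (INR k * th d)) * sin (INR J * (INR k * th d)))).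
 { rewrite rsum_shift. simpl (INR 0). rewrite !Rmult_0_l, !Rmult_0_r, sin_0.
   rewrite Rmult_0_l, Rplus_0_l. apply rsum_ext. intros. rewrite Nat.add_1_r. auto. }
 transitivity (rsum (S d) (fun k => (cos (INR k * ((INR I - INR J) * th d)) - cos (INR k * ((INR I + INR J) * th d))) / 2)).
 { apply rsum_ext. intros k _.
   replace (INR k * ((INR I - INR J) * th d)) with (INR I * (INR k * th d) - INR J * (INR k * th d)) by ring.
   replace (INR k * ((INR I + INR J) * th d)) with (INR I * (INR k * th d) + INR J * (INR k * th d)) by ring.
   rewrite cos_minus, cos_plus. field. }
 unfold Rdiv at 1. rewrite (rsum_ext _ _ (fun k => /2 * (cos (INR k * ((INR I - INR J) * th d)) + (-1) * cos (INR k * ((INR I + INR J) * th d))))) by (intros; lra).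
 rewrite rsum_scal, rsum_plus, rsum_scal.
 assert (sI := sin_nPI I). assert (sJ := sin_nPI J).
 assert (cI : cos (INR I * PI) ^ 2 = 1) by (pose proof (sin2_cos2 (INR I * PI)) as X; unfold Rsqr in X; rewrite sI in X; lra).
 assert (leI : 1 <= INR I <= INR d) by (split; [apply (le_INR 1)|apply le_INR]; lia).
 assert (leJ : 1 <= INR J <= INR d) by (split; [apply (le_INR 1)|apply le_INR]; lia).
 rewrite plus_INR in HthP, Hd. simpl in HthP, Hd.
 assert (Hsum : sin ((INR I + INR J) * th d / 2) <> 0).
 { apply Rgt_not_eq, sin_gt_0. apply Rmult_lt_0_compat; [|lra]. nra.
   replace ((INR I + INR J) * th d / 2) with ((INR I + INR J)/(2*(INR d + 1)) * PI) by (rewrite <- HthP; field; lra).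
   rewrite <- (Rmult_1_l PI) at 2. apply Rmult_lt_compat_r. apply PI_RGT_0.
   apply Rmult_lt_reg_r with (2*(INR d + 1)). lra. field_simplify; lra. }
 assert (Hs2 : sin ((INR I + INR J) * PI) = 0) by (rewrite Rmult_plus_distr_r, sin_plus, sI, sJ; ring).
 rewrite (cs_val d (INR I + INR J)) by auto.
 destruct (Nat.eqb_spec I J).
 - subst J. replace (INR I - INR I) with 0 by ring.
   rewrite (rsum_ext _ _ (fun _ => 1)) by (intros; rewrite !Rmult_0_l, Rmult_0_r; apply cos_0).
   rewrite rsum_const. rewrite Rmult_plus_distr_r, cos_plus, sI. rewrite S_INR, plus_INR. simpl.
   replace (cos (INR I * PI) * cos (INR I * PI)) with (cos (INR I * PI) ^ 2) by ring. rewrite cI. field.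
 - assert (Hdif : sin ((INR I - INR J) * th d / 2) <> 0).
   { assert (HIJ : INR I <> INR J) by (intro X; apply INR_eq in X; auto).
     assert (Hb : Rabs ((INR I - INR J) * th d / 2) < PI/2).
     { replace ((INR I - INR J) * th d / 2) with ((INR I - INR J)/(2*(INR d + 1)) * PI) by (rewrite <- HthP; field; lra).
       rewrite Rabs_mult, (Rabs_right PI) by (left; apply PI_RGT_0).
       apply Rmult_lt_reg_r with (/PI). apply Rinv_0_lt_compat, PI_RGT_0.
       replace (PI/2 * /PI) with (/2) by (field; apply PI_neq0). rewrite Rmult_assoc, Rinv_r, Rmult_1_r by apply PI_neq0.
       unfold Rdiv. rewrite Rabs_mult, Rabs_inv, (Rabs_right (2 * (INR d + 1))) by lra.
       assert (Rabs (INR I - INR J) < INR d + 1) by (apply Rabs_def1; lra).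
       replace (/2) with ((INR d + 1) * /(2*(INR d+1))) by (field; lra).
       apply Rmult_lt_compat_r; [apply Rinv_0_lt_compat; lra| auto]. }
     destruct (Rlt_or_le (INR I) (INR J)).
     + rewrite Rabs_left in Hb by (apply Rmult_lt_0_compat with (r1:=INR J - INR I) in Ht; lra).
       apply Rlt_not_eq. replace ((INR I - INR J) * th d / 2) with (- ((INR J - INR I) * th d / 2)) by field.
       rewrite sin_neg. apply Ropp_lt_gt_0_contravar. apply sin_gt_0. nra.
       pose proof PI_RGT_0. nra.
     + assert (INR J < INR I) by lra.
       rewrite Rabs_right in Hb by nra. apply Rgt_not_eq, sin_gt_0. nra. pose proof PI_RGT_0. nra. }
   assert (Hs1 : sin ((INR I - INR J) * PI) = 0) by (rewrite Rmult_minus_distr_r, sin_minus, sI, sJ; ring).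
   rewrite (cs_val d (INR I - INR J)) by auto.
   rewrite Rmult_minus_distr_r, cos_minus, Rmult_plus_distr_r, cos_plus, sI. field.
Qed.

Definition kap d k := INR (k+1) * th d.
Definition vk d k i := sin (INR (i+1) * kap d k).
Definition lam Sl d k := (2 * cos (kap d k) - 2) / ds Sl d ^ 2.
Definition dot d (v u : vec) := rsum d (fun i => v i * u i).

Lemma ds_pos Sl d : 0 < Sl -> 0 < ds Sl d.
Proof. intros. unfold ds. apply Rdiv_lt_0_compat; auto. apply INR_d1_pos. Qed.

Lemma Lmul_vk Sl d k i : (i < d)%nat -> Lmul Sl d (vk d k) i = lam Sl d k * vk d k i.
Proof. intros Hi. unfold Lmul, lam, vk.
 assert (Hp : (match i with O => 0 | S i' => sin (INR (i'+1) * kap d k) end) = sin ((INR (i+1) - 1) * kap d k)).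
 { destruct i. simpl. replace (1-1) with 0 by ring. rewrite Rmult_0_l, sin_0; auto.
   f_equal. replace (S i + 1)%nat with (i+1+1)%nat by lia. rewrite (plus_INR (i+1) 1). change (INR 1) with 1. ring. }
 assert (Hn : (if Nat.ltb (i+1) d then sin (INR (i+1+1) * kap d k) else 0) = sin ((INR (i+1) + 1) * kap d k)).
 { destruct (Nat.ltb_spec (i+1) d). rewrite (plus_INR (i+1) 1). auto.
   assert (i + 1 = d)%nat by lia. subst d. unfold kap, th.
   replace ((INR (i + 1) + 1) * (INR (k + 1) * (PI / INR (i + 1 + 1)))) with (INR (k+1) * PI).
   rewrite sin_nPI; auto. rewrite (plus_INR (i+1) 1). simpl. field.
   pose proof (pos_INR (i+1)). lra. }
 rewrite Hp, Hn. set (y := INR (i+1)). set (K := kap d k).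
 replace ((y - 1) * K) with (y*K - K) by ring. replace ((y + 1) * K) with (y*K + K) by ring.
 rewrite sin_minus, sin_plus. unfold Rdiv. ring. Qed.

Definition prevv (u : vec) (i : nat) := match i with O => 0 | S i' => u i' end.
Definition nextv (n : nat) (u : vec) (i : nat) := if Nat.ltb (i+1) n then u (i+1)%nat else 0.

Lemma sbp_prev n (u v : vec) : rsum (S n) (fun i => v i * prevv u i) = rsum n (fun i => v (S i) * u i).
Proof. rewrite rsum_shift. simpl. rewrite Rmult_0_r, Rplus_0_l. auto. Qed.

Lemma sbp_next n (u v : vec) : rsum (S n) (fun i => u i * nextv (S n) v i) = rsum n (fun i => u i * v (S i)).
Proof. simpl. unfold nextv at 2. destruct (Nat.ltb_spec (n+1) (S n)); [lia|].
 rewrite Rmult_0_r, Rplus_0_r. apply rsum_ext. intros i Hi. unfold nextv.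
 destruct (Nat.ltb_spec (i+1) (S n)); [|lia]. rewrite Nat.add_1_r; auto. Qed.

Lemma Lmul_split Sl d u i : Lmul Sl d u i = (prevv u i + nextv d u i - 2 * u i) / ds Sl d ^ 2.
Proof. unfold Lmul, prevv, nextv. f_equal. ring. Qed.

Lemma Lsym Sl d u v : dot d v (Lmul Sl d u) = dot d (Lmul Sl d v) u.
Proof. unfold dot.
 rewrite (rsum_ext d _ (fun i => / ds Sl d ^ 2 * (v i * prevv u i + v i * nextv d u i + (-2) * (v i * u i))))
  by (intros; rewrite Lmul_split; unfold Rdiv; ring).
 rewrite (rsum_ext d (fun i => Lmul Sl d v i * u i) (fun i => / ds Sl d ^ 2 * (u i * nextv d v i + u i * prevv v i + (-2) * (v i * u i))))
  by (intros; rewrite Lmul_split; unfold Rdiv; ring).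
 rewrite !rsum_scal, !rsum_plus, !rsum_scal. f_equal. f_equal.
 destruct d. simpl; ring.
 rewrite sbp_prev, sbp_next, sbp_prev, sbp_next.
 rewrite (rsum_ext d (fun i => v (S i) * u i) (fun i => u i * v (S i))) by (intros; ring).
 rewrite (rsum_ext d (fun i => v i * u (S i)) (fun i => u (S i) * v i)) by (intros; ring). ring. Qed.

Lemma dot_L Sl d k u : dot d (vk d k) (Lmul Sl d u) = lam Sl d k * dot d (vk d k) u.
Proof. rewrite Lsym. unfold dot. rewrite <- rsum_scal. apply rsum_ext. intros. rewrite Lmul_vk by auto. ring. Qed.

Lemma recon d (u : vec) i : (i < d)%nat ->
  2 / INR (d+1) * rsum d (fun k => vk d k i * dot d (vk d k) u) = u i.
Proof. intros Hi. unfold dot.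
 rewrite (rsum_ext d _ (fun k => rsum d (fun j => (vk d k i * vk d k j) * u j)))
   by (intros; rewrite <- rsum_scal; apply rsum_ext; intros; ring).
 rewrite rsum_swap.
 rewrite (rsum_ext d _ (fun j => if Nat.eqb i j then INR (d+1) / 2 * u j else 0)).
 rewrite rsum_delta by auto. field. pose proof (INR_d1_pos d); lra.
 intros j Hj.
 rewrite (rsum_ext d _ (fun k => u j * (sin (INR (i+1) * (INR (k+1) * th d)) * sin (INR (j+1) * (INR (k+1) * th d)))))
   by (intros; unfold vk, kap; ring).
 rewrite rsum_scal, orth by lia.
 destruct (Nat.eqb_spec (i+1) (j+1)); destruct (Nat.eqb_spec i j); try lia; ring. Qed.

Lemma Lmul_lin Sl d n (c : nat -> R) i :
  Lmul Sl d (fun j => rsum n (fun k => c k * vk d k j)) i = rsum n (fun k => c k * Lmul Sl d (vk d k) i).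
Proof. induction n; simpl.
 - unfold Lmul. destruct i; destruct (Nat.ltb _ d); unfold Rdiv; ring.
 - rewrite <- IHn. unfold Lmul. destruct i; destruct (Nat.ltb _ d); simpl; unfold Rdiv; ring. Qed.

Lemma lam_neg Sl d k : 0 < Sl -> (k < d)%nat -> lam Sl d k < 0.
Proof. intros HS Hk. unfold lam. apply Rdiv_neg_pos.
 2:{ apply pow_lt, ds_pos; auto. }
 assert (cos (kap d k) < 1); [|lra]. rewrite <- cos_0. apply cos_decreasing_1; try lra.
 - pose proof PI_RGT_0; lra.
 - unfold kap. left. apply Rmult_lt_0_compat; [apply lt_0_INR; lia| apply th_pos].
 - unfold kap, th. replace (INR (k+1) * (PI / INR (d+1))) with (INR (k+1)/INR (d+1) * PI) by (field; pose proof (INR_d1_pos d); lra).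
   rewrite <- (Rmult_1_l PI) at 2. apply Rmult_le_compat_r. left; apply PI_RGT_0.
   apply Rmult_le_reg_r with (INR (d+1)). apply INR_d1_pos. field_simplify. apply le_INR; lia.
   pose proof (INR_d1_pos d); lra.
 - unfold kap. apply Rmult_lt_0_compat; [apply lt_0_INR; lia| apply th_pos]. Qed.

Lemma Linv_spec Sl d p i : 0 < Sl -> (i < d)%nat -> Lmul Sl d (Linv Sl d p) i = p i.
Proof. intros HS Hi. unfold Linv. revert i Hi. apply epsilon_spec.
 exists (fun j => rsum d (fun k => (2 / INR (d+1) * (dot d (vk d k) p / lam Sl d k)) * vk d k j)).
 intros i Hi. rewrite Lmul_lin. rewrite <- (recon d p i Hi). rewrite <- rsum_scal. apply rsum_ext.
 intros k Hk. rewrite Lmul_vk by auto. field. split; [pose proof (INR_d1_pos d); lra| apply Rlt_not_eq, lam_neg; auto]. Qed.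

Lemma dot_Linv Sl d k p : 0 < Sl -> (k < d)%nat -> dot d (vk d k) (Linv Sl d p) = dot d (vk d k) p / lam Sl d k.
Proof. intros HS Hk. assert (Hl := lam_neg Sl d k HS Hk).
 apply (Rmult_eq_reg_l (lam Sl d k)); [|lra]. rewrite <- dot_L. field_simplify; [|lra].
 unfold dot. apply rsum_ext. intros. rewrite Linv_spec; auto. Qed.

Lemma lin_deriv r s : derivable_pt_lim (fun s => r * s) s r.
Proof. pose proof (derivable_pt_lim_scal id r s 1 (derivable_pt_lim_id s)) as H. rewrite Rmult_1_r in H. exact H. Qed.

Lemma ode2_zero (e f : R -> R) al be :
  (forall t, derivable_pt_lim e t (al * f t)) -> (forall t, derivable_pt_lim f t (be * e t)) ->
  e 0 = 0 -> f 0 = 0 -> forall t, 0 <= t -> e t = 0 /\ f t = 0.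
Proof. intros De Df e0 f0 t Ht.
 set (K := Rabs (al + be) + 1).
 set (w := fun s => e s * e s + f s * f s).
 set (g := fun s => w s * exp (- K * s)).
 set (g' := fun s => 2 * (al + be) * e s * f s * exp (- K * s) + w s * (exp (- K * s) * - K)).
 assert (Dw : forall s, derivable_pt_lim w s (2 * (al + be) * e s * f s)).
 { intros s. replace (2 * (al + be) * e s * f s) with ((al * f s * e s + e s * (al * f s)) + (be * e s * f s + f s * (be * e s))) by ring.
   apply (derivable_pt_lim_plus (fun s => e s * e s) (fun s => f s * f s)).
   apply (derivable_pt_lim_mult e e); auto. apply (derivable_pt_lim_mult f f); auto. }
 assert (Dx : forall s, derivable_pt_lim (fun s => exp (- K * s)) s (exp (- K * s) * - K)).
 { intros s. apply (derivable_pt_lim_comp (fun s => - K * s) exp).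
   apply lin_deriv.
   apply derivable_pt_lim_exp. }
 assert (Dg : forall s, derivable_pt_lim g s (g' s)).
 { intros s. unfold g, g'. apply (derivable_pt_lim_mult w (fun s => exp (- K * s))); auto. }
 assert (Hg' : forall s, g' s <= 0).
 { intros s. unfold g', w. pose proof (exp_pos (- K * s)) as Ep.
   assert (2 * (al + be) * e s * f s <= K * (e s * e s + f s * f s)).
   { unfold K. pose proof (Rle_abs (al+be)) as A1. pose proof (Rle_abs (-(al+be))) as A2. rewrite Rabs_Ropp in A2.
     assert (2 * e s * f s <= e s * e s + f s * f s) by (pose proof (pow2_ge_0 (e s - f s)); nra).
     assert (-(e s * e s + f s * f s) <= 2 * e s * f s) by (pose proof (pow2_ge_0 (e s + f s)); nra).
     assert (0 <= e s * e s + f s * f s) by (pose proof (pow2_ge_0 (e s)); pose proof (pow2_ge_0 (f s)); nra).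
     destruct (Rle_dec 0 (al+be)).
     - assert ((al+be) * (2 * e s * f s) <= (al+be) * (e s * e s + f s * f s)) by (apply Rmult_le_compat_l; lra). nra.
     - assert ((-(al+be)) * (2 * e s * f s) >= (-(al+be)) * (-(e s * e s + f s * f s))) by (apply Rle_ge, Rmult_le_compat_l; lra). nra. }
   nra. }
 assert (g0 : g 0 = 0) by (unfold g, w; rewrite e0, f0; ring).
 assert (gt0 : 0 <= g t) by (unfold g, w; pose proof (exp_pos (- K * t)); nra).
 assert (gt : g t = 0).
 { destruct Ht as [Ht|Ht]; [|subst; auto].
   destruct (MVT_cor2 g g' 0 t Ht (fun c _ => Dg c)) as [c0 [E _]].
   pose proof (Hg' c0). nra. }
 unfold g in gt. pose proof (exp_pos (- K * t)).
 assert (w t = 0) by nra. unfold w in *. split; nra. Qed.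

Lemma ode2_uniq (e1 f1 e2 f2 : R -> R) al be :
  (forall t, derivable_pt_lim e1 t (al * f1 t)) -> (forall t, derivable_pt_lim f1 t (be * e1 t)) ->
  (forall t, derivable_pt_lim e2 t (al * f2 t)) -> (forall t, derivable_pt_lim f2 t (be * e2 t)) ->
  e1 0 = e2 0 -> f1 0 = f2 0 -> forall t, 0 <= t -> e1 t = e2 t /\ f1 t = f2 t.
Proof. intros D1 D2 D3 D4 I1 I2 t Ht.
 destruct (ode2_zero (fun s => e1 s - e2 s) (fun s => f1 s - f2 s) al be) with (t := t) as [A B]; auto; try lra.
 - intros s. replace (al * (f1 s - f2 s)) with (al * f1 s - al * f2 s) by ring. apply (derivable_pt_lim_minus e1 e2); auto.
 - intros s. replace (be * (e1 s - e2 s)) with (be * e1 s - be * e2 s) by ring. apply (derivable_pt_lim_minus f1 f2); auto.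
Qed.

Lemma mode_deriv d (f : state -> state) F x k t : is_flow d f F ->
  derivable_pt_lim (fun s => dot d (vk d k) (fst (F s x))) t (dot d (vk d k) (fst (f (F t x)))) /\
  derivable_pt_lim (fun s => dot d (vk d k) (snd (F s x))) t (dot d (vk d k) (snd (f (F t x)))).
Proof. intros H. destruct (H x) as [_ H2]. split; unfold dot; apply (rsum_deriv d (vk d k) (fun i s => _ (F s x) i));
 intros i Hi; apply (H2 t i Hi). Qed.

Lemma mode_init d (f : state -> state) F x k : is_flow d f F ->
  dot d (vk d k) (fst (F 0 x)) = dot d (vk d k) (fst x) /\ dot d (vk d k) (snd (F 0 x)) = dot d (vk d k) (snd x).
Proof. intros H. destruct (H x) as [H1 _]. split; unfold dot; apply rsum_ext; intros i Hi; destruct (H1 i Hi) as [A B]; rewrite ?A, ?B; auto. Qed.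

Lemma dot_opp d v u : dot d v (fun i => - u i) = - dot d v u.
Proof. unfold dot. rewrite (rsum_ext d _ (fun i => (-1) * (v i * u i))) by (intros; ring). rewrite rsum_scal. ring. Qed.

Section Flows.
Variables (Sl : R) (d : nat) (c : R) (HS : 0 < Sl).

Lemma flowA_modes FA (Sf Cf : R -> R) x k t :
  is_flow d (fieldA Sl d c) FA -> (k < d)%nat ->
  (forall s, derivable_pt_lim Sf s (Cf s)) -> (forall s, derivable_pt_lim Cf s (- c^2 * Sf s)) ->
  Sf 0 = 0 -> Cf 0 = 1 -> 0 <= t ->
  let a := dot d (vk d k) (fst x) in let b := dot d (vk d k) (snd x) in let l := lam Sl d k in
  dot d (vk d k) (fst (FA t x)) = a * Cf t + (- b / l) * Sf t /\
  dot d (vk d k) (snd (FA t x)) = (c^2 * l * a) * Sf t + b * Cf t.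
Proof. intros HF Hk DS DC S0 C0 Ht a b l.
 assert (Hl : l < 0) by (apply lam_neg; auto).
 apply (ode2_uniq (fun s => dot d (vk d k) (fst (FA s x))) (fun s => dot d (vk d k) (snd (FA s x)))
   (fun s => a * Cf s + (- b / l) * Sf s) (fun s => (c^2 * l * a) * Sf s + b * Cf s) (- / l) (c^2 * l)); auto.
 - intros s. destruct (mode_deriv d _ FA x k s HF) as [D _].
   replace (- / l * dot d (vk d k) (snd (FA s x))) with (dot d (vk d k) (fst (fieldA Sl d c (FA s x)))); auto.
   unfold fieldA; simpl. rewrite dot_opp, dot_Linv by auto. fold l. field. lra.
 - intros s. destruct (mode_deriv d _ FA x k s HF) as [_ D].
   replace (c^2 * l * dot d (vk d k) (fst (FA s x))) with (dot d (vk d k) (snd (fieldA Sl d c (FA s x)))); auto.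
   unfold fieldA; simpl. unfold dot at 1. rewrite (rsum_ext d _ (fun i => c^2 * (vk d k i * Lmul Sl d (fst (FA s x)) i))) by (intros; ring).
   rewrite rsum_scal. fold (dot d (vk d k) (Lmul Sl d (fst (FA s x)))). rewrite dot_L. fold l. ring.
 - intros s. replace (- / l * (c ^ 2 * l * a * Sf s + b * Cf s)) with (a * (- c^2 * Sf s) + (- b / l) * Cf s) by (field; lra).
   apply (derivable_pt_lim_plus (fun s => a * Cf s) (fun s => (- b / l) * Sf s)); apply derivable_pt_lim_scal; auto.
 - intros s. replace (c ^ 2 * l * (a * Cf s + - b / l * Sf s)) with ((c^2 * l * a) * Cf s + b * (- c^2 * Sf s)) by (field; lra).
   apply (derivable_pt_lim_plus (fun s => (c^2*l*a) * Sf s) (fun s => b * Cf s)); apply derivable_pt_lim_scal; auto.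
 - destruct (mode_init d _ FA x k HF) as [A _]. rewrite A, S0, C0. fold a. ring.
 - destruct (mode_init d _ FA x k HF) as [_ A]. rewrite A, S0, C0. fold b. ring.
Qed.

Lemma flowB_modes FB x k t :
  is_flow d (fieldB Sl d c) FB -> (k < d)%nat -> 0 <= t ->
  let a := dot d (vk d k) (fst x) in let b := dot d (vk d k) (snd x) in let K := (1 - c^2) * lam Sl d k - 1 in
  dot d (vk d k) (fst (FB t x)) = a /\
  dot d (vk d k) (snd (FB t x)) = b + t * (K * a).
Proof. intros HF Hk Ht a b K.
 destruct (ode2_uniq (fun s => dot d (vk d k) (fst (FB s x))) (fun s => dot d (vk d k) (snd (FB s x)))
   (fun s => a) (fun s => b + s * (K * a)) 0 K) with (t := t) as [A B]; auto.
 - intros s. destruct (mode_deriv d _ FB x k s HF) as [D _].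
   replace (0 * dot d (vk d k) (snd (FB s x))) with (dot d (vk d k) (fst (fieldB Sl d c (FB s x)))); auto.
   unfold fieldB, dot; simpl. rewrite (rsum_ext d _ (fun _ => 0)) by (intros; ring). rewrite rsum_const. ring.
 - intros s. destruct (mode_deriv d _ FB x k s HF) as [_ D].
   replace (K * dot d (vk d k) (fst (FB s x))) with (dot d (vk d k) (snd (fieldB Sl d c (FB s x)))); auto.
   unfold fieldB; simpl. unfold dot at 1.
   rewrite (rsum_ext d _ (fun i => (1 - c^2) * (vk d k i * Lmul Sl d (fst (FB s x)) i) + (-1) * (vk d k i * fst (FB s x) i))) by (intros; ring).
   rewrite rsum_plus, !rsum_scal. fold (dot d (vk d k) (Lmul Sl d (fst (FB s x)))). rewrite dot_L. unfold K, dot. ring.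
 - intros s. rewrite Rmult_0_l. apply (derivable_pt_lim_const a).
 - intros s. replace (K * a) with (0 + (K * a) * 1) at 1 by ring.
   apply (derivable_pt_lim_plus (fun _ => b) (fun s => s * (K * a))). apply (derivable_pt_lim_const b).
   rewrite Rmult_1_r. apply (derivable_pt_lim_ext (fun s => (K*a) * s)). intros; ring. apply lin_deriv.
 - destruct (mode_init d _ FB x k HF) as [A _]. rewrite A. auto.
 - destruct (mode_init d _ FB x k HF) as [_ A]. rewrite A. fold b. ring.
Qed.
End Flows.

Lemma Rabs_vk d k i : Rabs (vk d k i) <= 1.
Proof. unfold vk. pose proof (SIN_bound (INR (i+1) * kap d k)). apply Rabs_le; lra. Qed.

Lemma dot_abs d k u : Rabs (dot d (vk d k) u) <= rsum d (fun i => Rabs (u i)).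
Proof. unfold dot. eapply Rle_trans; [apply rsum_abs|]. apply rsum_le. intros.
 rewrite Rabs_mult. pose proof (Rabs_vk d k i). pose proof (Rabs_pos (u i)). nra. Qed.

Definition ab d k (y : state) := Rabs (dot d (vk d k) (fst y)) + Rabs (dot d (vk d k) (snd y)).

Lemma ab_le d k y : ab d k y <= snorm d y.
Proof. unfold ab, snorm. rewrite rsum_plus. pose proof (dot_abs d k (fst y)). pose proof (dot_abs d k (snd y)). lra. Qed.

Lemma comp_le d (u : vec) i : (1 <= d)%nat -> (i < d)%nat ->
  Rabs (u i) <= rsum d (fun k => Rabs (dot d (vk d k) u)).
Proof. intros Hd Hi. rewrite <- (recon d u i Hi). rewrite Rabs_mult.
 assert (H2 : Rabs (2 / INR (d+1)) <= 1).
 { rewrite Rabs_right. apply Rmult_le_reg_r with (INR (d+1)). apply INR_d1_pos.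
   field_simplify. rewrite plus_INR. simpl. assert (1 <= INR d) by (apply (le_INR 1); auto). lra.
   pose proof (INR_d1_pos d); lra. left. apply Rdiv_lt_0_compat. lra. apply INR_d1_pos. }
 assert (H3 : Rabs (rsum d (fun k => vk d k i * dot d (vk d k) u)) <= rsum d (fun k => Rabs (dot d (vk d k) u))).
 { eapply Rle_trans; [apply rsum_abs|]. apply rsum_le. intros. rewrite Rabs_mult.
   pose proof (Rabs_vk d i0 i). pose proof (Rabs_pos (dot d (vk d i0) u)). nra. }
 pose proof (Rabs_pos (rsum d (fun k => vk d k i * dot d (vk d k) u))). pose proof (Rabs_pos (2 / INR (d+1))). nra. Qed.

Lemma snorm_le d y : (1 <= d)%nat -> snorm d y <= INR d * rsum d (fun k => ab d k y).
Proof. intros Hd. unfold snorm. rewrite <- rsum_const. apply rsum_le. intros i Hi.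
 unfold ab. rewrite rsum_plus. pose proof (comp_le d (fst y) i Hd Hi). pose proof (comp_le d (snd y) i Hd Hi). lra. Qed.

Lemma quad_bound P m a b a0 b0 : 0 < P -> 0 < m -> P * a^2 + m * b^2 = P * a0^2 + m * b0^2 ->
  Rabs a + Rabs b <= (1 + 2 * ((P + m) * (/P + /m))) * (Rabs a0 + Rabs b0).
Proof. intros HP Hm E. set (rho := (P + m) * (/P + /m)).
 assert (Hr : 0 <= rho) by (unfold rho; pose proof (Rinv_0_lt_compat P HP); pose proof (Rinv_0_lt_compat m Hm); nra).
 assert (E1 : a^2 + b^2 <= (/P + /m) * (P * a^2 + m * b^2)).
 { replace ((/P + /m) * (P * a^2 + m * b^2)) with (a^2 + b^2 + (P/m) * a^2 + (m/P) * b^2) by (field; lra).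
   assert (0 <= P/m * a^2) by (apply Rmult_le_pos; [left; apply Rdiv_lt_0_compat; lra| apply pow2_ge_0]).
   assert (0 <= m/P * b^2) by (apply Rmult_le_pos; [left; apply Rdiv_lt_0_compat; lra| apply pow2_ge_0]). lra. }
 assert (E2 : P * a0^2 + m * b0^2 <= (P + m) * (a0^2 + b0^2)) by (pose proof (pow2_ge_0 a0); pose proof (pow2_ge_0 b0); nra).
 assert (E3 : a^2 + b^2 <= rho * (a0^2 + b0^2)).
 { rewrite E in E1. unfold rho. assert (0 <= /P + /m) by (pose proof (Rinv_0_lt_compat P HP); pose proof (Rinv_0_lt_compat m Hm); lra).
   eapply Rle_trans; [apply E1|]. replace ((P + m) * (/ P + / m) * (a0 ^ 2 + b0 ^ 2)) with ((/P+/m)*((P+m)*(a0^2+b0^2))) by ring. apply Rmult_le_compat_l; auto. }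
 set (X := Rabs a + Rabs b). set (Y := Rabs a0 + Rabs b0).
 assert (X^2 <= 2 * (a^2 + b^2)) by (unfold X; rewrite <- (pow2_abs a), <- (pow2_abs b); pose proof (pow2_ge_0 (Rabs a - Rabs b)); nra).
 assert (a0^2 + b0^2 <= Y^2) by (unfold Y; rewrite <- (pow2_abs a0), <- (pow2_abs b0); pose proof (Rabs_pos a0); pose proof (Rabs_pos b0); nra).
 assert (HX : 0 <= X) by (unfold X; pose proof (Rabs_pos a); pose proof (Rabs_pos b); lra).
 assert (HY : 0 <= Y) by (unfold Y; pose proof (Rabs_pos a0); pose proof (Rabs_pos b0); lra).
 assert (X^2 <= ((1 + 2 * rho) * Y)^2) by nra.
 apply Rsqr_incr_0_var. rewrite !Rsqr_pow2. auto. nra. Qed.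

Section Main.
Variables (Sl : R) (d : nat) (c h : R) (FA FB : R -> state -> state) (Sf Cf : R -> R).
Hypotheses (HS : 0 < Sl) (Hd : (1 <= d)%nat) (Hh : 0 < h)
  (HFA : is_flow d (fieldA Sl d c) FA) (HFB : is_flow d (fieldB Sl d c) FB)
  (DS : forall s, derivable_pt_lim Sf s (Cf s)) (DC : forall s, derivable_pt_lim Cf s (- c^2 * Sf s))
  (S0 : Sf 0 = 0) (C0 : Cf 0 = 1) (HSC : Cf h ^ 2 + c^2 * Sf h ^ 2 = 1) (HSp : 0 < Sf h).

Definition Kc k := (1 - c^2) * lam Sl d k - 1.
Definition mu k := Cf h - (h/2) * Kc k * Sf h / lam Sl d k.
Definition m12 k := - Sf h / lam Sl d k.
Definition m21 k := c^2 * lam Sl d k * Sf h + (h/2) * Kc k * Cf h + (h/2) * Kc k * mu k.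

Lemma strang_modes k x : (k < d)%nat ->
  dot d (vk d k) (fst (strang FA FB h x)) = mu k * dot d (vk d k) (fst x) + m12 k * dot d (vk d k) (snd x) /\
  dot d (vk d k) (snd (strang FA FB h x)) = m21 k * dot d (vk d k) (fst x) + mu k * dot d (vk d k) (snd x).
Proof. intros Hk. unfold strang.
 assert (Hl := lam_neg Sl d k HS Hk).
 pose proof (flowB_modes Sl d c FB x k (h/2) HFB Hk ltac:(lra)) as B1. cbv zeta in B1. destruct B1 as [B1 B2].
 pose proof (flowA_modes Sl d c HS FA Sf Cf (FB (h/2) x) k h HFA Hk DS DC S0 C0 ltac:(lra)) as A1. cbv zeta in A1. destruct A1 as [A1 A2].
 pose proof (flowB_modes Sl d c FB (FA h (FB (h/2) x)) k (h/2) HFB Hk ltac:(lra)) as B3. cbv zeta in B3. destruct B3 as [B3 B4].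
 rewrite B3, B4, A1, A2, B1, B2. unfold m21, mu, m12, Kc. split; field; lra. Qed.

Lemma det1 k : (k < d)%nat -> mu k ^ 2 - m12 k * m21 k = 1.
Proof. intros Hk. assert (Hl := lam_neg Sl d k HS Hk). rewrite <- HSC. unfold m21, m12, mu. field. lra. Qed.

Definition Qf k (y : state) := (- m21 k) * dot d (vk d k) (fst y) ^ 2 + m12 k * dot d (vk d k) (snd y) ^ 2.

Lemma Q_inv k x : (k < d)%nat -> Qf k (strang FA FB h x) = Qf k x.
Proof. intros Hk. unfold Qf. destruct (strang_modes k x Hk) as [E1 E2]. rewrite E1, E2.
 set (a := dot d (vk d k) (fst x)). set (b := dot d (vk d k) (snd x)).
 pose proof (det1 k Hk) as D.
 transitivity ((mu k ^ 2 - m12 k * m21 k) * (- m21 k * a ^ 2 + m12 k * b ^ 2)); [ring|]. rewrite D. ring. Qed.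

Hypothesis Hmu : forall k, (k < d)%nat -> mu k ^ 2 < 1.

Lemma m12_pos k : (k < d)%nat -> 0 < m12 k.
Proof. intros Hk. assert (Hl := lam_neg Sl d k HS Hk). unfold m12.
 replace (- Sf h / lam Sl d k) with (Sf h / - lam Sl d k) by (field; lra). apply Rdiv_lt_0_compat; lra. Qed.

Lemma m21_neg k : (k < d)%nat -> 0 < - m21 k.
Proof. intros Hk. pose proof (m12_pos k Hk). pose proof (det1 k Hk). pose proof (Hmu k Hk). nra. Qed.

Definition G k := 1 + 2 * ((- m21 k + m12 k) * (/ (- m21 k) + / m12 k)).

Lemma Q_iter k n x : (k < d)%nat -> Qf k (Nat.iter n (strang FA FB h) x) = Qf k x.
Proof. intros Hk. induction n; simpl; auto. rewrite Q_inv; auto. Qed.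

Lemma ab_iter k n x : (k < d)%nat -> ab d k (Nat.iter n (strang FA FB h) x) <= G k * ab d k x.
Proof. intros Hk. unfold ab, G. apply quad_bound. apply m21_neg; auto. apply m12_pos; auto.
 pose proof (Q_iter k n x Hk) as E. unfold Qf in E. exact E. Qed.

Lemma G_pos k : (k < d)%nat -> 0 <= G k.
Proof. intros Hk. unfold G. pose proof (m21_neg k Hk). pose proof (m12_pos k Hk).
 pose proof (Rinv_0_lt_compat _ H). pose proof (Rinv_0_lt_compat _ H0). nra. Qed.

Lemma main_bound : exists M : R, forall (n : nat) (x : state),
    snorm d (Nat.iter n (strang FA FB h) x) <= M * snorm d x.
Proof. exists (INR d * rsum d G). intros n x.
 eapply Rle_trans; [apply snorm_le; auto|].
 rewrite Rmult_assoc. apply Rmult_le_compat_l; [apply pos_INR|].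
 rewrite Rmult_comm, <- rsum_scal. apply rsum_le. intros k Hk.
 eapply Rle_trans; [apply ab_iter; auto|]. rewrite Rmult_comm. apply Rmult_le_compat_r. apply G_pos; auto.
 apply ab_le. Qed.
End Main.

Lemma kap_bounds d k : (k < d)%nat -> 0 < kap d k <= PI.
Proof. intros Hk. split.
 - unfold kap. apply Rmult_lt_0_compat; [apply lt_0_INR; lia| apply th_pos].
 - unfold kap, th. replace (INR (k+1) * (PI / INR (d+1))) with (INR (k+1)/INR (d+1) * PI) by (field; pose proof (INR_d1_pos d); lra).
   rewrite <- (Rmult_1_l PI) at 2. apply Rmult_le_compat_r. left; apply PI_RGT_0.
   apply Rmult_le_reg_r with (INR (d+1)). apply INR_d1_pos. field_simplify. apply le_INR; lia.
   pose proof (INR_d1_pos d); lra. Qed.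

Lemma lam_le Sl d k : 0 < Sl -> (k < d)%nat -> lam Sl d k <= lam Sl d 0.
Proof. intros HS Hk. unfold lam. unfold Rdiv. apply Rmult_le_compat_r.
 left. apply Rinv_0_lt_compat, pow_lt, ds_pos; auto.
 destruct k. lra. assert (cos (kap d (S k)) < cos (kap d 0)); [|lra].
 destruct (kap_bounds d (S k) Hk). destruct (kap_bounds d 0 ltac:(lia)).
 apply cos_decreasing_1; try lra. unfold kap. apply Rmult_lt_compat_r. apply th_pos. apply lt_INR; lia. Qed.

Lemma omega1_lam Sl d : 0 < Sl -> omega1 Sl d ^ 2 = - lam Sl d 0.
Proof. intros HS. unfold omega1, lam, kap. assert (Hd := ds_pos Sl d HS).
 replace (INR (0+1) * th d) with (2 * (PI / (2 * INR (d+1)))).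
 rewrite cos_2a_sin. field. lra.
 unfold th. simpl. field. pose proof (INR_d1_pos d). lra. Qed.

Lemma trig_key th A : 0 < th -> 0 < A -> th + 2 * atan A < PI -> (cos th - A * sin th) ^ 2 < 1.
Proof. intros Ht HA Hc. set (phi := atan A).
 assert (Hp : 0 < phi) by (unfold phi; rewrite <- atan_0; apply atan_increasing; auto).
 assert (Hp2 : phi < PI/2) by (apply atan_bound).
 assert (Hcp : 0 < cos phi) by (apply cos_gt_0; lra).
 assert (HA' : A = sin phi / cos phi) by (unfold phi; rewrite <- (tan_atan A) at 1; unfold tan; auto).
 assert (E : cos th - A * sin th = cos (th + phi) / cos phi) by (rewrite HA', cos_plus; field; lra).
 rewrite E. fold phi in Hc.
 assert (cos (th + phi) < cos phi) by (apply cos_decreasing_1; lra).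
 assert (cos (PI - phi) < cos (th + phi)) by (apply cos_decreasing_1; lra).
 rewrite Rtrigo_facts.cos_pi_minus in *.
 replace ((cos (th + phi) / cos phi) ^ 2) with ((cos (th + phi))^2 / (cos phi)^2) by (field; lra).
 apply Rmult_lt_reg_r with (cos phi ^ 2). nra. field_simplify; nra. Qed.

Theorem theorem8p1 (Sl : R) (d : nat) (c h : R)
  (FA FB : R -> state -> state)
  (HS : 0 < Sl) (Hd : (1 <= d)%nat) (Hc : 0 <= c <= 1) (Hh : 0 < h)
  (HFA : is_flow d (fieldA Sl d c) FA)
  (HFB : is_flow d (fieldB Sl d c) FB)
  (Hcond :
     (0 < c ->
      c * h + 2 * atan (h * (1 + (1 - c ^ 2) * omega1 Sl d ^ 2)
                        / (2 * c * omega1 Sl d ^ 2)) < PI) /\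
     (c = 0 ->
      h < 2 * omega1 Sl d / sqrt (1 + omega1 Sl d ^ 2))) :
  exists M : R, forall (n : nat) (x : state),
    snorm d (Nat.iter n (strang FA FB h) x) <= M * snorm d x.
Proof.
 assert (Hw1 : omega1 Sl d ^ 2 = - lam Sl d 0) by (apply omega1_lam; auto).
 assert (Hl0 : lam Sl d 0 < 0) by (apply lam_neg; auto; lia).
 destruct Hcond as [Hpos Hzero].
 destruct (Req_dec c 0) as [Hc0|Hc0].
 -
   subst c.
   apply (main_bound Sl d 0 h FA FB (fun t => t) (fun _ => 1)); auto.
   + intros s. apply derivable_pt_lim_id.
   + intros s. replace (- 0 ^ 2 * s) with 0 by ring. apply (derivable_pt_lim_const 1).
   + ring.
   + intros k Hk. unfold mu, Kc.
     assert (Hl := lam_neg Sl d k HS Hk). assert (Hle := lam_le Sl d k HS Hk).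
     specialize (Hzero eq_refl).
     set (w1 := omega1 Sl d ^ 2) in *. set (om := omega1 Sl d) in *.
     assert (Hsq : 0 < sqrt (1 + w1)) by (apply sqrt_lt_R0; lra).
     assert (Hs2 : sqrt (1 + w1) * sqrt (1 + w1) = 1 + w1) by (apply sqrt_sqrt; lra).
     assert (Hom : 0 < om).
     { assert (HH : 0 < 2 * om / sqrt (1 + w1)) by lra.
       replace om with ((2 * om / sqrt (1 + w1)) * sqrt (1 + w1) / 2) by (field; lra).
       apply Rdiv_lt_0_compat; [apply Rmult_lt_0_compat|]; lra. }
     assert (H1 : h * sqrt (1 + w1) < 2 * om).
     { apply Rmult_lt_reg_r with (/ sqrt (1 + w1)). apply Rinv_0_lt_compat; auto.
       rewrite Rmult_assoc, Rinv_r, Rmult_1_r by lra. exact Hzero. }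
     assert (H2 : h^2 * (1 + w1) < 4 * w1).
     { assert (Ew : w1 = om * om) by (unfold w1; ring).
       set (q := sqrt (1 + w1)) in *. clearbody q.
       assert (0 < h * q) by (apply Rmult_lt_0_compat; auto).
       assert ((h*q)*(h*q) < (2*om)*(2*om)) by nra.
       replace (h^2 * (1 + w1)) with ((h*q)*(h*q)) by (rewrite <- Hs2; ring). lra. }
     set (w := - lam Sl d k).
     replace (1 - h / 2 * ((1 - 0 ^ 2) * lam Sl d k - 1) * h / lam Sl d k) with (1 - h^2 * (w + 1) / (2 * w)) by (unfold w; field; lra).
     assert (w1 <= w) by (unfold w; lra).
     assert (0 < w1) by lra.
     assert (h^2 < 4) by nra.
     assert (h^2 * (w + 1) < 4 * w) by nra.
     assert (0 < h^2 * (w + 1) / (2 * w)) by (apply Rdiv_lt_0_compat; nra).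
     assert (h^2 * (w + 1) / (2 * w) < 2) by (apply Rmult_lt_reg_r with (2*w); [lra|]; field_simplify; nra).
     nra.
 -
   assert (Hcp : 0 < c) by lra. specialize (Hpos Hcp).
   set (w1 := omega1 Sl d ^ 2) in *.
   assert (Hw1p : 0 < w1) by lra.
   set (A1 := h * (1 + (1 - c ^ 2) * w1) / (2 * c * w1)) in *.
   assert (HA1 : 0 < A1) by (unfold A1; apply Rdiv_lt_0_compat; [apply Rmult_lt_0_compat; [lra|]; assert (0 <= (1 - c^2) * w1) by (apply Rmult_le_pos; nra); lra| apply Rmult_lt_0_compat; lra]).
   assert (Hat : 0 < atan A1) by (rewrite <- atan_0; apply atan_increasing; auto).
   assert (Hch : c * h < PI) by lra.
   assert (Hsin : 0 < sin (c * h)) by (apply sin_gt_0; nra).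
   apply (main_bound Sl d c h FA FB (fun t => sin (c * t) / c) (fun t => cos (c * t))); auto.
   + intros s. apply (derivable_pt_lim_ext (mult_real_fct (/c) (comp sin (fun t => c * t)))).
     intros z. unfold mult_real_fct, comp. field. lra.
     replace (cos (c * s)) with (/ c * (cos (c * s) * c)) by (field; lra).
     apply derivable_pt_lim_scal. apply (derivable_pt_lim_comp (fun t => c * t) sin). apply lin_deriv. apply derivable_pt_lim_sin.
   + intros s. apply (derivable_pt_lim_ext (comp cos (fun t => c * t))). intros; reflexivity.
     replace (- c ^ 2 * (sin (c * s) / c)) with (- sin (c * s) * c) by (field; lra).
     apply (derivable_pt_lim_comp (fun t => c * t) cos). apply lin_deriv. apply derivable_pt_lim_cos.
   + rewrite Rmult_0_r, sin_0. field. lra.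
   + rewrite Rmult_0_r, cos_0. auto.
   + pose proof (sin2_cos2 (c * h)) as X. unfold Rsqr in X. field_simplify. lra. lra.
   + apply Rdiv_lt_0_compat; lra.
   + intros k Hk. unfold mu, Kc.
     assert (Hl := lam_neg Sl d k HS Hk). assert (Hle := lam_le Sl d k HS Hk).
     set (w := - lam Sl d k).
     set (A := h / (2 * c) * ((1 - c^2) + / w)).
     replace (cos (c * h) - h / 2 * ((1 - c ^ 2) * lam Sl d k - 1) * (sin (c * h) / c) / lam Sl d k)
       with (cos (c * h) - A * sin (c * h)) by (unfold A, w; field; lra).
     assert (Hw : w1 <= w) by (unfold w; lra).
     assert (HA : 0 < A).
     { unfold A. apply Rmult_lt_0_compat. apply Rdiv_lt_0_compat; lra.
       assert (0 < / w) by (apply Rinv_0_lt_compat; lra). nra. }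
     assert (HAA : A <= A1).
     { unfold A, A1. replace (h * (1 + (1 - c ^ 2) * w1) / (2 * c * w1)) with (h / (2 * c) * ((1 - c^2) + / w1)) by (field; lra).
       apply Rmult_le_compat_l. left; apply Rdiv_lt_0_compat; lra.
       assert (/ w <= / w1) by (apply Rinv_le_contravar; lra). lra. }
     apply trig_key; auto. nra.
     destruct (Rle_lt_or_eq_dec _ _ HAA) as [HAA'|HAA'].
     * pose proof (atan_increasing _ _ HAA'). lra.
     * rewrite HAA'. lra.
Qed.
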